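(* Let $n,k$ be positive integers, $m=kn+1$, and let $\Delta$ be a $\Gamma_{m,n}$-semimodule. If $a$ is an $m$-generator of $\Delta$, then for every integer $l>0$ the integer interval $[a-l(kn+1),\,a-lkn-1]$ has empty intersection with $\Delta$.
   Context: $\Gamma_{m,n}=\{am+bn:a,b\in\mathbb{Z}_{\ge0}\}$ for coprime positive $m,n$. A $\Gamma_{m,n}$-semimodule is a subset $\Delta\subset\mathbb{Z}_{\ge0}$ with $\Delta+\Gamma_{m,n}\subset\Delta$. An $m$-generator of $\Delta$ is an element $a\in\Delta$ with $a-m\notin\Delta$. *)

(* Defs.v *)
From Stdlib Require Import ZArith.
Open Scope Z_scope.

Definition in_Gamma (m n : Z) (x : Z) : Prop :=
  exists a b : Z, 0 <= a /\ 0 <= b /\ x = a * m + b * n.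

Definition is_semimodule (m n : Z) (Delta : Z -> Prop) : Prop :=
  (forall x, Delta x -> 0 <= x) /\
  (forall x g, Delta x -> in_Gamma m n g -> Delta (x + g)).

Definition is_m_generator (m : Z) (Delta : Z -> Prop) (a : Z) : Prop :=
  Delta a /\ ~ Delta (a - m).

(* Main.v *)
Require Import Defs.
From Stdlib Require Import ZArith Lia.
Open Scope Z_scope.

Theorem mainTheorem14 (n k : Z) (Delta : Z -> Prop) (a : Z) :
  0 < n -> 0 < k ->
  is_semimodule (k * n + 1) n Delta ->
  is_m_generator (k * n + 1) Delta a ->
  forall l x : Z, 0 < l ->
    a - l * (k * n + 1) <= x <= a - l * k * n - 1 ->
    ~ Delta x.
Proof.
  intros Hn Hk [_ Hs] [Ha Hna] l x Hl Hx Dx.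
  set (j := x - (a - l * (k * n + 1))).
  apply Hna.
  replace (a - (k * n + 1)) with (x + ((l - 1 - j) * (k * n + 1) + (j * k) * n)) by (unfold j; ring).
  apply Hs; auto.
  exists (l - 1 - j), (j * k). unfold j in *. repeat split; nia.
Qed.
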